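(* Let $G$ be a group and $n$ a positive integer. If $x \in \gamma_j(G)$ and $y \in \gamma_j(G)^4\gamma_{j+1}(G)$ for some $1 \leq j \leq n$, then $(xy)^{4^{n-j}} \equiv x^{4^{n-j}} \pmod{N_{n+1,j}(G)}$.
   Context: $\gamma_1(G) = G$, $\gamma_{i+1}(G) = [\gamma_i(G), G]$. For a subgroup $H$ and integer $m$, $H^m$ is the subgroup generated by all $m$-th powers. For $1 \le k \le n$, $N_{n,k}(G) = \gamma_k(G)^{4^{n-k}}\gamma_{k+1}(G)^{4^{n-k-1}} \cdots \gamma_n(G)$. *)

(* Defs.v *)
From Stdlib Require Import Arith.

Record group := Group {
  gcar :> Type;
  gmul : gcar -> gcar -> gcar;
  gone : gcar;
  ginv : gcar -> gcar;
  gmulA : forall a b c, gmul a (gmul b c) = gmul (gmul a b) c;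
  gmul1l : forall a, gmul gone a = a;
  gmulVl : forall a, gmul (ginv a) a = gone
}.

Section GroupDefs.
Variable G : group.

Inductive gen (S : G -> Prop) : G -> Prop :=
| gen_in : forall x, S x -> gen S x
| gen_one : gen S (gone G)
| gen_mul : forall x y, gen S x -> gen S y -> gen S (gmul G x y)
| gen_inv : forall x, gen S x -> gen S (ginv G x).

Definition comm (a b : G) : G :=
  gmul G (gmul G (ginv G a) (ginv G b)) (gmul G a b).

Fixpoint gpow (x : G) (n : nat) : G :=
  match n with
  | 0 => gone G
  | S m => gmul G (gpow x m) x
  end.

(* Lower central series: gamma 1 = G, gamma (i+1) = [gamma i, G].
   (gamma 0 is also set to G; it is never used.) *)
Fixpoint gamma (i : nat) : G -> Prop :=
  match i with
  | 0 => fun _ => True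
  | 1 => fun _ => True
  | S i' => gen (fun z => exists a b, gamma i' a /\ z = comm a b)
  end.

Definition powsub (H : G -> Prop) (m : nat) : G -> Prop :=
  gen (fun z => exists h, H h /\ z = gpow h m).

(* Product HK (taken as the subgroup generated by the product set;
   for the normal subgroups considered here it is the product set itself). *)
Definition prodsub (H K : G -> Prop) : G -> Prop :=
  gen (fun z => exists h k, H h /\ K k /\ z = gmul G h k).

(* Naux k d = gamma_k^{4^d} gamma_{k+1}^{4^{d-1}} ... gamma_{k+d}. *)
Fixpoint Naux (k d : nat) : G -> Prop :=
  match d with
  | 0 => gamma k
  | S d' => prodsub (powsub (gamma k) (4 ^ d)) (Naux (S k) d')
  end.

Definition Nnk (n k : nat) : G -> Prop := Naux k (n - k).

Definition congr_mod (N : G -> Prop) (a b : G) : Prop := N (gmul G (ginv G b) a).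

End GroupDefs.

(* Main.v *)
Require Import Defs.
From Stdlib Require Import Arith Lia.

Lemma mulVr (G : group) (a : G) : gmul G a (ginv G a) = gone G.
Proof.
  assert (H : gmul G (gmul G a (ginv G a)) (gmul G a (ginv G a)) = gmul G a (ginv G a)).
  { rewrite <- gmulA. rewrite (gmulA G (ginv G a) a). rewrite gmulVl, gmul1l. reflexivity. }
  rewrite <- (gmul1l G (gmul G a (ginv G a))).
  rewrite <- (gmulVl G (gmul G a (ginv G a))) at 1.
  rewrite <- gmulA. rewrite H. apply gmulVl.
Qed.

Lemma mul1r (G : group) (a : G) : gmul G a (gone G) = a.
Proof. rewrite <- (gmulVl G a), gmulA, mulVr, gmul1l. reflexivity. Qed.

Lemma mulKl (G : group) (a x : G) : gmul G (ginv G a) (gmul G a x) = x.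
Proof. rewrite gmulA, gmulVl, gmul1l. reflexivity. Qed.

Lemma mulKr (G : group) (a x : G) : gmul G a (gmul G (ginv G a) x) = x.
Proof. rewrite gmulA, mulVr, gmul1l. reflexivity. Qed.

Lemma inv_uniq (G : group) (a c : G) : gmul G a c = gone G -> c = ginv G a.
Proof.
  intro H. rewrite <- (mul1r G (ginv G a)), <- H, mulKl. reflexivity.
Qed.

Lemma inv_inv (G : group) (a : G) : ginv G (ginv G a) = a.
Proof. symmetry. apply inv_uniq. apply gmulVl. Qed.

Lemma inv_mul (G : group) (a b : G) : ginv G (gmul G a b) = gmul G (ginv G b) (ginv G a).
Proof.
  symmetry. apply inv_uniq. rewrite <- gmulA, mulKr. apply mulVr.
Qed.

Lemma inv_one (G : group) : ginv G (gone G) = gone G.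
Proof. symmetry. apply inv_uniq. apply gmul1l. Qed.

Ltac grp := repeat progress (rewrite ?inv_mul, ?inv_inv, ?inv_one, <- ?gmulA, ?gmul1l,
   ?mul1r, ?mulKl, ?mulKr, ?mulVr, ?gmulVl).


Definition conjg (G : group) (a g : G) : G := gmul G (gmul G (ginv G g) a) g.
Definition fb (G : group) (b z : G) : G :=
  gmul G (ginv G (gpow G b 4)) (gpow G (gmul G b z) 4).
Definition subgrp (G : group) (P : G -> Prop) :=
  P (gone G) /\ (forall a b, P a -> P b -> P (gmul G a b)) /\ (forall a, P a -> P (ginv G a)).
Definition normalp (G : group) (P : G -> Prop) := forall a g, P a -> P (conjg G a g).

Lemma conj_mul (G : group) (a b g : G) : conjg G (gmul G a b) g = gmul G (conjg G a g) (conjg G b g).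
Proof. unfold conjg. grp. reflexivity. Qed.
Lemma conj_inv (G : group) (a g : G) : conjg G (ginv G a) g = ginv G (conjg G a g).
Proof. unfold conjg. grp. reflexivity. Qed.
Lemma conj_one (G : group) (g : G) : conjg G (gone G) g = gone G.
Proof. unfold conjg. grp. reflexivity. Qed.
Lemma conj_pow (G : group) (a g : G) m : conjg G (gpow G a m) g = gpow G (conjg G a g) m.
Proof. induction m; simpl. apply conj_one. rewrite conj_mul, IHm. reflexivity. Qed.
Lemma conj_comm (G : group) (a b g : G) : conjg G (comm G a b) g = comm G (conjg G a g) (conjg G b g).
Proof. unfold comm. rewrite !conj_mul, !conj_inv. reflexivity. Qed.

Lemma gen_sub (G : group) (S : G -> Prop) : subgrp G (gen G S).
Proof. split; [|split]; intros; [apply gen_one|apply gen_mul|apply gen_inv]; auto. Qed.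

Lemma gen_normal (G : group) (S : G -> Prop) :
  (forall s g, S s -> S (conjg G s g)) -> normalp G (gen G S).
Proof.
  intros HS a g Ha. induction Ha.
  - apply gen_in; auto.
  - rewrite conj_one. apply gen_one.
  - rewrite conj_mul. apply gen_mul; auto.
  - rewrite conj_inv. apply gen_inv; auto.
Qed.

Lemma gen_min (G : group) (S P : G -> Prop) : subgrp G P -> (forall s, S s -> P s) ->
  forall z, gen G S z -> P z.
Proof.
  intros [H1 [H2 H3]] HS z Hz. induction Hz; auto.
Qed.

Lemma gamma_SS (G : group) i : gamma G (S (S i)) =
  gen G (fun z => exists a b, gamma G (S i) a /\ z = comm G a b).
Proof. reflexivity. Qed.

Lemma gamma_sub (G : group) i : subgrp G (gamma G i).
Proof.
  destruct i as [|[|i]]; [split; [|split]; simpl; auto ..|].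
  rewrite gamma_SS. apply gen_sub.
Qed.

Lemma gamma_normal (G : group) i : normalp G (gamma G i).
Proof.
  induction i as [|[|i] IH]; [intros ? ? ?; simpl; auto ..|].
  rewrite gamma_SS. apply gen_normal.
  intros s g [a [b [Ha ->]]]. exists (conjg G a g), (conjg G b g).
  split; [apply IH; auto| apply conj_comm].
Qed.

Lemma comm_gamma (G : group) k (z h : G) : gamma G k z -> gamma G (S k) (comm G z h).
Proof.
  destruct k as [|k]; intros Hz; [simpl; auto|].
  rewrite gamma_SS. apply gen_in. eauto.
Qed.

Lemma powsub_normal (G : group) H m : normalp G H -> normalp G (powsub G H m).
Proof.
  intros HN. apply gen_normal. intros s g [h [Hh ->]].
  exists (conjg G h g). split; [auto| apply conj_pow].
Qed.

Lemma prodsub_normal (G : group) H K : normalp G H -> normalp G K -> normalp G (prodsub G H K).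
Proof.
  intros HH HK. apply gen_normal. intros s g [h [k [Hh [Hk ->]]]].
  exists (conjg G h g), (conjg G k g). repeat split; auto. apply conj_mul.
Qed.

Lemma Naux_sub (G : group) k d : subgrp G (Naux G k d).
Proof. destruct d; simpl. apply gamma_sub. apply gen_sub. Qed.

Lemma Naux_normal (G : group) d : forall k, normalp G (Naux G k d).
Proof.
  induction d; intro k; simpl. apply gamma_normal.
  apply prodsub_normal; auto. apply powsub_normal, gamma_normal.
Qed.

Lemma gpow_add (G : group) (x : G) a b : gpow G x (a + b) = gmul G (gpow G x a) (gpow G x b).
Proof.
  induction b; simpl. rewrite Nat.add_0_r, mul1r. reflexivity.
  rewrite Nat.add_succ_r. simpl. rewrite IHb, gmulA. reflexivity.
Qed.

Lemma gpow_mul (G : group) (x : G) a b : gpow G x (a * b) = gpow G (gpow G x a) b.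
Proof.
  induction b; simpl. rewrite Nat.mul_0_r. reflexivity.
  rewrite Nat.mul_succ_r, gpow_add, IHb. reflexivity.
Qed.

Lemma gpow_4S (G : group) (x : G) d : gpow G x (4 ^ S d) = gpow G (gpow G x (4 ^ d)) 4.
Proof. rewrite <- gpow_mul. f_equal. simpl. lia. Qed.

Lemma alg (G : group) (N : G -> Prop) (b z : G) : subgrp G N -> normalp G N ->
  (forall h, N (comm G z h)) -> N (gmul G (ginv G (gpow G z 4)) (fb G b z)).
Proof.
  intros [H1 [H2 H3]] HN Hc.
  set (E := fun a a' => N (gmul G (ginv G a) a')).
  assert (Econg : forall a a' c c', E a a' -> E c c' -> E (gmul G a c) (gmul G a' c')).
  { unfold E; intros a a' c c' Ha Hc'.
    replace (gmul G (ginv G (gmul G a c)) (gmul G a' c')) with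
      (gmul G (conjg G (gmul G (ginv G a) a') c) (gmul G (ginv G c) c'))
      by (unfold conjg; grp; reflexivity).
    apply H2; auto. }
  assert (Ez : forall h, E z (conjg G z h)).
  { intro h. unfold E. replace (gmul G (ginv G z) (conjg G z h)) with (comm G z h)
      by (unfold comm, conjg; grp; reflexivity). auto. }
  assert (Ezz : E z z). { unfold E. rewrite gmulVl. auto. }
  assert (Hf : fb G b z = gmul G (gmul G (gmul G (conjg G z (gpow G b 3))
      (conjg G z (gpow G b 2))) (conjg G z b)) z).
  { unfold fb, conjg. cbn [gpow]. grp. reflexivity. }
  assert (Hz : gpow G z 4 = gmul G (gmul G (gmul G z z) z) z).
  { cbn [gpow]. rewrite gmul1l. reflexivity. }
  change (E (gpow G z 4) (fb G b z)). rewrite Hf, Hz.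
  repeat apply Econg; auto.
Qed.

Lemma fb_one (G : group) (b : G) : fb G b (gone G) = gone G.
Proof. unfold fb. cbn [gpow]. grp. reflexivity. Qed.
Lemma fb_mul (G : group) (b x y : G) :
  fb G b (gmul G x y) = gmul G (fb G b x) (fb G (gmul G b x) y).
Proof. unfold fb. cbn [gpow]. grp. reflexivity. Qed.
Lemma fb_inv (G : group) (b x : G) :
  fb G b (ginv G x) = ginv G (fb G (gmul G b (ginv G x)) x).
Proof. unfold fb. cbn [gpow]. grp. reflexivity. Qed.

Lemma GR (G : group) (S P : G -> Prop) : subgrp G P ->
  (forall b s, S s -> P (fb G b s)) -> forall z, gen G S z -> forall b, P (fb G b z).
Proof.
  intros [H1 [H2 H3]] HS z Hz. induction Hz; intro b; auto.
  - rewrite fb_one. auto.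
  - rewrite fb_mul. auto.
  - rewrite fb_inv. auto.
Qed.

Lemma RQ (G : group) d :
  (forall i (g h : G), gamma G i g -> Naux G (S i) d (comm G (gpow G g (4 ^ d)) h)) /\
  (forall k (b z : G), Naux G k d z -> Naux G k (S d) (fb G b z)).
Proof.
  induction d as [|d [IHR IHQ]].
  - split.
    + intros i g h Hg. change (Naux G (S i) 0) with (gamma G (S i)). cbn [gpow Nat.pow]. rewrite gmul1l. apply comm_gamma. auto.
    + intros k b z Hz. change (Naux G k 1) with (prodsub G (powsub G (gamma G k) (4^1)) (gamma G (S k))). apply gen_in.
      exists (gpow G z 4), (gmul G (ginv G (gpow G z 4)) (fb G b z)).
      split; [|split].
      * apply gen_in. exists z. split; auto.
      * apply alg; [apply gamma_sub|apply gamma_normal|]. intro h. apply comm_gamma; auto.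
      * grp. reflexivity.
  - assert (R : forall i (g h : G), gamma G i g ->
        Naux G (S i) (S d) (comm G (gpow G g (4 ^ S d)) h)).
    { intros i g h Hg. rewrite gpow_4S. set (a := gpow G g (4 ^ d)).
      replace (comm G (gpow G a 4) h) with (fb G a (comm G a h))
        by (unfold fb, comm; cbn [gpow]; grp; reflexivity).
      apply IHQ. apply IHR. auto. }
    split; [exact R|].
    intros k b z Hz. change (Naux G k (S (S d))) with
      (prodsub G (powsub G (gamma G k) (4 ^ S (S d))) (Naux G (S k) (S d))).
    revert b. apply (GR G (fun w => exists h k0, powsub G (gamma G k) (4 ^ S d) h /\ Naux G (S k) d k0 /\ w = gmul G h k0)); [apply gen_sub| |exact Hz]. intros b s [h [k' [Hh [Hk ->]]]].
    rewrite fb_mul. apply gen_mul.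
    + revert b. apply (GR G (fun z => exists h0, gamma G k h0 /\ z = gpow G h0 (4 ^ S d)));
        [apply gen_sub| |exact Hh].
      intros b s [g [Hg ->]]. apply gen_in.
      set (s := gpow G g (4 ^ S d)).
      exists (gpow G s 4), (gmul G (ginv G (gpow G s 4)) (fb G b s)). split; [|split].
      * apply gen_in. exists g. split; auto. subst s. symmetry. apply gpow_4S.
      * apply alg; [apply Naux_sub|apply Naux_normal|]. intro h0. apply R. auto.
      * grp. reflexivity.
    + apply gen_in. exists (gone G), (fb G (gmul G b h) k'). split; [|split].
      * apply gen_one.
      * apply IHQ. auto.
      * rewrite gmul1l. reflexivity.
Qed.

Lemma main_aux (G : group) j (x y : G) : Naux G j 1 y -> forall m,
  congr_mod G (Naux G j (S m)) (gpow G (gmul G x y) (4 ^ m)) (gpow G x (4 ^ m)).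
Proof.
  intros Hy m. induction m; unfold congr_mod in *.
  - simpl. grp. exact Hy.
  - rewrite !gpow_4S. set (u := gpow G x (4 ^ m)) in *.
    set (v := gpow G (gmul G x y) (4 ^ m)) in *.
    replace v with (gmul G u (gmul G (ginv G u) v)) by (grp; reflexivity).
    apply (proj2 (RQ G (S m))). exact IHm.
Qed.

Theorem mainTheorem11 (G : group) (n j : nat) (x y : G) :
  1 <= n -> 1 <= j -> j <= n ->
  gamma G j x ->
  prodsub G (powsub G (gamma G j) 4) (gamma G (S j)) y ->
  congr_mod G (Nnk G (S n) j)
    (gpow G (gmul G x y) (4 ^ (n - j)))
    (gpow G x (4 ^ (n - j))).
Proof.
  intros Hn Hj Hjn Hx Hy. unfold Nnk.
  replace (S n - j) with (S (n - j)) by lia.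
  apply main_aux. exact Hy.
Qed.
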